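(* Let $G=(V,E)$ be a simple undirected graph with $V=[n]$ and let $k\ge1$ be an integer such that $\alpha_k(G)=k\,\vartheta(G)$. Then $$\vartheta_k(G)=\vartheta'_k(G)=\theta^1_k(G)=\theta^2_k(G)=\theta^3_k(G)=k\,\alpha(G)=\alpha_k(G).$$
   Context: $\alpha(G)$ is the stability number; $\alpha_k(G)$ is the maximum number of vertices of an induced $k$-colorable subgraph of $G$. $J$ is the all-ones matrix, $\langle A,B\rangle=\mathrm{trace}(AB)$, $\ge0$ entrywise, $\succeq0$ positive semidefinite, $\mathbb S^m$ symmetric $m\times m$ matrices. $\vartheta(G)=\max\{\langle J,Z\rangle: Z\in\mathbb S^n,\ Z_{ij}=0\ (\{i,j\}\in E),\ \langle I,Z\rangle=1,\ Z\succeq 0\}$ (Lovász number). $\vartheta_k(G)=\max\{\langle J,Z\rangle: Z\in\mathbb S^n,\ Z_{ij}=0\ (\{i,j\}\in E),\ \langle I,Z\rangle=k,\ Z\succeq0,\ I-Z\succeq0\}$, and $\vartheta'_k(G)$ is the same with the additional constraint $Z\ge0$. $\theta^1_k(G)=\max\langle I,Z\rangle$ over $Z,X\in\mathbb S^n$ subject to $Z_{ij}=0$ for $\{i,j\}\in E$; $X_{ii}=0$ for $i\in[n]$; $Z,X\ge0$; $Z-X\succeq0$; $\begin{bmatrix}1&\mathrm{diag}(Z)^{\top}\\ \mathrm{diag}(Z)&Z+(k-1)X\end{bmatrix}\succeq0$; $1-Z_{ii}-Z_{jj}+Z_{ij}+(k-1)X_{ij}\ge0$ for $i>j$; $Z_{ii}-Z_{ij}-(k-1)X_{ij}\ge0$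 for $i\ne j$. $\theta^2_k(G)$ is the optimal value of the same problem without the last two families of linear inequalities. $\theta^3_k(G)=\max\{\langle I,Z\rangle: Z\in\mathbb S^n,\ Z_{ij}=0\ (\{i,j\}\in E),\ Z_{ii}\le1,\ Z\ge0,\ \begin{bmatrix}k&\mathrm{diag}(Z)^{\top}\\ \mathrm{diag}(Z)&Z\end{bmatrix}\succeq0\}$. *)

(* Defs.v *)
From HB Require Import structures.
From mathcomp Require Import all_boot all_order all_algebra.
From mathcomp Require Import boolp classical_sets reals.
Set Implicit Arguments. Unset Strict Implicit. Unset Printing Implicit Defensive.
Import Order.TTheory GRing.Theory Num.Theory.
Local Open Scope ring_scope.
Local Open Scope classical_set_scope.

Definition simple_graph (n : nat) (E : rel 'I_n) :=
  symmetric E /\ irreflexive E.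

Definition stable (n : nat) (E : rel 'I_n) (S : {set 'I_n}) : bool :=
  [forall i in S, forall j in S, ~~ E i j].

Definition k_colorable_set (n k : nat) (E : rel 'I_n) (S : {set 'I_n}) : Prop :=
  exists c : 'I_n -> 'I_k,
    forall i j, i \in S -> j \in S -> E i j -> c i != c j.

Definition alpha (n : nat) (E : rel 'I_n) : nat :=
  \max_(S : {set 'I_n} | stable E S) #|S|.

Definition alpha_k (n k : nat) (E : rel 'I_n) : nat :=
  \max_(S : {set 'I_n} | `[< k_colorable_set k E S >]) #|S|.

Section SDP.
Variable R : realType.

Definition symm (m : nat) (A : 'M[R]_m) : Prop := A^T = A.

Definition psd (m : nat) (A : 'M[R]_m) : Prop :=
  symm A /\ forall x : 'cV[R]_m, 0 <= (x^T *m A *m x) 0 0.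

Definition nonneg_mx (m : nat) (A : 'M[R]_m) : Prop := forall i j, 0 <= A i j.

(* <J, Z> = sum of all entries; <I, Z> = trace *)
Definition innerJ (m : nat) (A : 'M[R]_m) : R := \sum_i \sum_j A i j.

Definition diagv (m : nat) (A : 'M[R]_m) : 'cV[R]_m := \col_i A i i.

Definition arrow_mx (m : nat) (a : R) (Z B : 'M[R]_m) : 'M[R]_(1 + m) :=
  block_mx (a%:M : 'M[R]_1) (diagv Z)^T (diagv Z) B.

Definition zero_on_edges (n : nat) (E : rel 'I_n) (Z : 'M[R]_n) : Prop :=
  forall i j, E i j -> Z i j = 0.

Definition theta (n : nat) (E : rel 'I_n) : R :=
  sup [set innerJ Z | Z in [set Z : 'M[R]_n |
        [/\ symm Z, zero_on_edges E Z, \tr Z = 1 & psd Z]]].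

Definition theta_k (n k : nat) (E : rel 'I_n) : R :=
  sup [set innerJ Z | Z in [set Z : 'M[R]_n |
        [/\ symm Z, zero_on_edges E Z, \tr Z = k%:R, psd Z & psd (1%:M - Z)]]].

Definition theta'_k (n k : nat) (E : rel 'I_n) : R :=
  sup [set innerJ Z | Z in [set Z : 'M[R]_n |
        [/\ symm Z, zero_on_edges E Z, \tr Z = k%:R, psd Z /\ psd (1%:M - Z)
          & nonneg_mx Z]]].

Definition feas2 (n k : nat) (E : rel 'I_n) (Z X : 'M[R]_n) : Prop :=
  [/\ symm Z /\ symm X, zero_on_edges E Z, (forall i, X i i = 0),
      nonneg_mx Z /\ nonneg_mx X & psd (Z - X) /\ psd (arrow_mx 1 Z (Z + (k.-1)%:R *: X))].

Definition lin_ineq (n k : nat) (Z X : 'M[R]_n) : Prop :=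
  (forall i j : 'I_n, (j < i)%N ->
     0 <= 1 - Z i i - Z j j + Z i j + (k.-1)%:R * X i j) /\
  (forall i j : 'I_n, i != j -> 0 <= Z i i - Z i j - (k.-1)%:R * X i j).

Definition theta1_k (n k : nat) (E : rel 'I_n) : R :=
  sup [set \tr Z | Z in [set Z : 'M[R]_n |
        exists X : 'M[R]_n, feas2 k E Z X /\ lin_ineq k Z X]].

Definition theta2_k (n k : nat) (E : rel 'I_n) : R :=
  sup [set \tr Z | Z in [set Z : 'M[R]_n | exists X : 'M[R]_n, feas2 k E Z X]].

Definition theta3_k (n k : nat) (E : rel 'I_n) : R :=
  sup [set \tr Z | Z in [set Z : 'M[R]_n |
        [/\ symm Z, zero_on_edges E Z, (forall i, Z i i <= 1), nonneg_mx Z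
          & psd (arrow_mx k%:R Z Z)]]].

End SDP.

(* Main.v *)
Require Import Defs.
From HB Require Import structures.
From mathcomp Require Import all_boot all_order all_algebra.
From mathcomp Require Import boolp classical_sets reals.
From mathcomp Require Import ring lra.
Import Order.TTheory GRing.Theory Num.Theory.
Set Implicit Arguments. Unset Strict Implicit. Unset Printing Implicit Defensive.
Local Open Scope ring_scope.
Local Open Scope classical_set_scope.

Lemma sum_indic (R : realType) (I : finType) (A : {set I}) :
  \sum_i ((i \in A)%:R : R) = #|A|%:R.
Proof.
rewrite -sum1_card natr_sum [RHS]big_mkcond /=; apply: eq_bigr => i _.
by case: (i \in A).
Qed.

Lemma wCS (R : realType) (I : finType) (w y : I -> R) :
  (forall i, 0 <= w i) ->
  (\sum_i w i * y i) ^+ 2 <= (\sum_i w i) * (\sum_i w i * y i ^+ 2).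
Proof.
move=> w0.
have H : 0 <= \sum_i \sum_j w i * w j * (y i - y j) ^+ 2.
  apply: sumr_ge0 => i _; apply: sumr_ge0 => j _.
  by rewrite mulr_ge0 ?sqr_ge0 ?mulr_ge0.
have E : \sum_i \sum_j w i * w j * (y i - y j) ^+ 2 =
   2 * ((\sum_i w i) * (\sum_i w i * y i ^+ 2) - (\sum_i w i * y i) ^+ 2).
  have -> : \sum_i \sum_j w i * w j * (y i - y j) ^+ 2 =
     \sum_i \sum_j (w i * y i ^+ 2 * w j + w i * (w j * y j ^+ 2)
                     - 2 * ((w i * y i) * (w j * y j))).
    by apply: eq_bigr => i _; apply: eq_bigr => j _; ring.
  set W := \sum_i w i; set B := \sum_i w i * y i ^+ 2; set C := \sum_i w i * y i.
  have -> : \sum_i \sum_j (w i * y i ^+ 2 * w j + w i * (w j * y j ^+ 2)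
                     - 2 * ((w i * y i) * (w j * y j))) =
            \sum_i (w i * y i ^+ 2 * W + w i * B - 2 * (w i * y i * C)).
    apply: eq_bigr => i _.
    by rewrite sumrB big_split /= -!mulr_sumr.
  rewrite sumrB big_split /= -!mulr_suml -mulr_sumr -mulr_suml.
  rewrite -/B -/W -/C. ring.
lra.
Qed.

Definition qf (R : realType) (m : nat) (A : 'M[R]_m) (x : 'cV[R]_m) : R :=
  (x^T *m A *m x) 0 0.

Lemma qfE (R : realType) (m : nat) (A : 'M[R]_m) (x : 'cV[R]_m) :
  qf A x = \sum_i \sum_j x i 0 * A i j * x j 0.
Proof.
rewrite /qf mxE.
under eq_bigr => j _ do rewrite mxE mulr_suml.
rewrite exchange_big /=; apply: eq_bigr => i _; apply: eq_bigr => j _.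
by rewrite !mxE.
Qed.

Lemma psdE (R : realType) (m : nat) (A : 'M[R]_m) :
  psd A <-> symm A /\ forall x, 0 <= qf A x.
Proof. by []. Qed.

Lemma psd_MMt (R : realType) (m p : nat) (M : 'M[R]_(m, p)) : psd (M *m M^T).
Proof.
split; first by rewrite /symm trmx_mul trmxK.
move=> x.
have -> : x^T *m (M *m M^T) *m x = (M^T *m x)^T *m (M^T *m x).
  by rewrite trmx_mul trmxK !mulmxA.
rewrite mxE; apply: sumr_ge0 => i _; rewrite mxE -expr2; exact: sqr_ge0.
Qed.

Lemma qfD (R : realType) (m : nat) (A B : 'M[R]_m) x :
  qf (A + B) x = qf A x + qf B x.
Proof. by rewrite /qf mulmxDr mulmxDl mxE. Qed.

Lemma qfB (R : realType) (m : nat) (A B : 'M[R]_m) x :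
  qf (A - B) x = qf A x - qf B x.
Proof. by rewrite /qf mulmxBr mulmxBl !mxE. Qed.

Lemma qfZ (R : realType) (m : nat) (c : R) (A : 'M[R]_m) x :
  qf (c *: A) x = c * qf A x.
Proof. by rewrite /qf -scalemxAr -scalemxAl !mxE. Qed.

Lemma psd_scale (R : realType) (m : nat) (c : R) (A : 'M[R]_m) :
  0 <= c -> psd A -> psd (c *: A).
Proof.
move=> c0 [sA qA]; split; first by rewrite /symm linearZ /= sA.
move=> x; have := qfZ c A x; rewrite /qf => ->.
exact: mulr_ge0 c0 (qA x).
Qed.

Lemma psd_add (R : realType) (m : nat) (A B : 'M[R]_m) :
  psd A -> psd B -> psd (A + B).
Proof.
move=> [sA qA] [sB qB]; split; first by rewrite /symm linearD /= sA sB.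
move=> x; have := qfD A B x; rewrite /qf => ->.
exact: addr_ge0 (qA x) (qB x).
Qed.

Lemma qf_delta (R : realType) (m : nat) (A : 'M[R]_m) i j :
  (((delta_mx i 0 : 'cV[R]_m))^T *m A *m (delta_mx j 0 : 'cV[R]_m)) 0 0 = A i j.
Proof. by rewrite trmx_delta -rowE -colE !mxE. Qed.

Lemma psd_2x2 (R : realType) (m : nat) (A : 'M[R]_m) i j :
  psd A -> A i j + A j i <= A i i + A j j.
Proof.
move=> [_ qA]; have := qA ((delta_mx i 0 : 'cV[R]_m) - delta_mx j 0).
have sub : forall P Q : 'M[R]_1, (P - Q) 0 0 = P 0 0 - Q 0 0 by move=> P Q; rewrite !mxE.
rewrite !linearB /= !mulmxBl !sub !qf_delta.
lra.
Qed.

Lemma innerJ_le (R : realType) (m : nat) (A : 'M[R]_m) :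
  psd A -> innerJ A <= m%:R * \tr A.
Proof.
move=> pA.
have h : 2 * innerJ A <= 2 * (m%:R * \tr A).
  have -> : 2 * innerJ A = \sum_i \sum_j (A i j + A j i).
    rewrite /innerJ.
    under [RHS]eq_bigr => i _ do rewrite big_split /=.
    rewrite big_split /= [X in _ + X]exchange_big /=. ring.
  have -> : 2 * (m%:R * \tr A) = \sum_i \sum_j (A i i + A j j).
    have -> : \sum_i \sum_j (A i i + A j j) = \sum_i (m%:R * A i i + \tr A).
      apply: eq_bigr => i _; rewrite big_split /= sumr_const card_ord mulr_natl.
      by [].
    rewrite big_split /= sumr_const card_ord -mulr_sumr -/(\tr A) !mulr_natl.
    by rewrite mulr2n.
  apply: ler_sum => i _; apply: ler_sum => j _; exact: psd_2x2.
lra.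
Qed.

Lemma mx1l (R : realType) (n : nat) (P : 'M[R]_1) (Q : 'M[R]_(1, n)) :
  P *m Q = P 0 0 *: Q.
Proof. by rewrite {1}[P]mx11_scalar mul_scalar_mx. Qed.

Lemma mx1r (R : realType) (n : nat) (Q : 'M[R]_(n, 1)) (P : 'M[R]_1) :
  Q *m P = P 0 0 *: Q.
Proof. by rewrite {1}[P]mx11_scalar mul_mx_scalar. Qed.

Lemma qf_arrow (R : realType) (m : nat) (a : R) (Z B : 'M[R]_m) (t : R)
  (x : 'cV[R]_m) :
  qf (arrow_mx a Z B) (col_mx (t%:M : 'cV[R]_1) x) =
  a * t ^+ 2 + 2 * t * ((diagv Z)^T *m x) 0 0 + qf B x.
Proof.
rewrite /qf /arrow_mx tr_col_mx mul_row_block mul_row_col tr_scalar_mx.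
set d := diagv Z.
rewrite mx1r mulmxDl (mx1l _ d^T) -scalemxAl.
have -> : x^T *m d = (d^T *m x)^T by rewrite trmx_mul trmxK.
set u := d^T *m x; set q := x^T *m B *m x.
rewrite !mxE !big_ord1 !mxE /= mulr1n.
rewrite mulr1n; ring.
Qed.

Lemma arrow_ge0 (R : realType) (m : nat) (a : R) (Z B : 'M[R]_m) t x :
  psd (arrow_mx a Z B) ->
  0 <= a * t ^+ 2 + 2 * t * ((diagv Z)^T *m x) 0 0 + qf B x.
Proof. by move=> [_ q]; rewrite -qf_arrow; exact: q. Qed.

Lemma arrow_psd (R : realType) (m : nat) (a : R) (Z B : 'M[R]_m) :
  symm B ->
  (forall t x, 0 <= a * t ^+ 2 + 2 * t * ((diagv Z)^T *m x) 0 0 + qf B x) ->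
  psd (arrow_mx a Z B).
Proof.
move=> sB h; split.
  by rewrite /symm /arrow_mx tr_block_mx tr_scalar_mx trmxK sB.
move=> y; rewrite -[y]vsubmxK [usubmx y]mx11_scalar.
have := h (usubmx y 0 0) (dsubmx y); rewrite -qf_arrow; exact.
Qed.

Lemma sup_eq (R : realType) (S : set R) (v : R) :
  (exists x, S x /\ v <= x) -> (forall x, S x -> x <= v) -> sup S = v.
Proof.
move=> [x [Sx vx]] ub; apply/le_anti/andP; split.
  by apply: ge_sup; [exists x | move=> y Sy; exact: ub].
apply: (le_trans vx); apply: ub_le_sup => //; by exists v => y Sy; exact: ub.
Qed.

Lemma sup_zero (R : realType) (S : set R) :
  (forall x, S x -> x = 0) -> sup S = 0.
Proof.
move=> h; have [->|nS] := eqVneq S set0; first exact: sup0.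
have [x Sx] : S !=set0 by apply/set0P.
apply: sup_eq; first by exists x; split => //; rewrite (h x Sx) lexx.
by move=> y /h ->; rewrite lexx.
Qed.

Lemma diag_delta (R : realType) (m : nat) (Z : 'M[R]_m) i :
  ((diagv Z)^T *m (delta_mx i 0 : 'cV[R]_m)) 0 0 = Z i i.
Proof. by rewrite -colE !mxE. Qed.

Lemma diag_one (R : realType) (m : nat) (Z : 'M[R]_m) :
  ((diagv Z)^T *m (const_mx 1 : 'cV[R]_m)) 0 0 = \tr Z.
Proof. by rewrite mxE /mxtrace; apply: eq_bigr => i _; rewrite !mxE mulr1. Qed.

Lemma innerJ_qf (R : realType) (m : nat) (Z : 'M[R]_m) :
  innerJ Z = qf Z (const_mx 1).
Proof.
rewrite qfE /innerJ; apply: eq_bigr => i _; apply: eq_bigr => j _.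
by rewrite !mxE mul1r mulr1.
Qed.

Lemma innerJZ (R : realType) (m : nat) (c : R) (Z : 'M[R]_m) :
  innerJ (c *: Z) = c * innerJ Z.
Proof.
rewrite /innerJ mulr_sumr; apply: eq_bigr => i _; rewrite mulr_sumr.
by apply: eq_bigr => j _; rewrite mxE.
Qed.

Lemma theta_ub (R : realType) (n : nat) (E : rel 'I_n) (Z : 'M[R]_n) :
  symm Z -> zero_on_edges E Z -> \tr Z = 1 -> psd Z -> innerJ Z <= theta R E.
Proof.
move=> sZ zZ tZ pZ; rewrite /theta; apply: ub_le_sup; last by exists Z.
exists n%:R => y [W [sW zW tW pW] <-].
by have := innerJ_le pW; rewrite tW mulr1.
Qed.

Lemma thetak_ub (R : realType) (n : nat) (E : rel 'I_n) (k : nat) (Z : 'M[R]_n) :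
  (1 <= k)%N -> symm Z -> zero_on_edges E Z -> \tr Z = k%:R -> psd Z ->
  innerJ Z <= k%:R * theta R E.
Proof.
move=> k1 sZ zZ tZ pZ.
have kp : 0 < (k%:R : R) by rewrite ltr0n.
have h : innerJ (k%:R^-1 *: Z) <= theta R E.
  apply: theta_ub.
  - by rewrite /symm linearZ /= sZ.
  - by move=> i j eij; rewrite mxE zZ // mulr0.
  - by rewrite mxtraceZ tZ mulVf // gt_eqF.
  - by apply: psd_scale => //; rewrite invr_ge0 ltW.
move: h; rewrite innerJZ => h.
have -> : innerJ Z = k%:R * (k%:R^-1 * innerJ Z).
  by rewrite mulrA mulfV ?mul1r // gt_eqF.
by rewrite ler_wpM2l // ltW.
Qed.

Lemma theta3_ub (R : realType) (n : nat) (E : rel 'I_n) (k : nat) (Z : 'M[R]_n) :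
  (1 <= k)%N -> 0 <= theta R E -> symm Z -> zero_on_edges E Z ->
  psd (arrow_mx k%:R Z Z) -> \tr Z <= k%:R * theta R E.
Proof.
move=> k1 t0 sZ zZ pA.
have kp : 0 < (k%:R : R) by rewrite ltr0n.
have pZ : psd Z.
  split => // x; have := arrow_ge0 0 x pA.
  by rewrite expr2 !(mulr0, mul0r, add0r).
set s := \tr Z.
have [hs|hs] := lerP s 0.
  by apply: (le_trans hs); rewrite mulr_ge0 // ltW.
set u := s / k%:R.
have ku : k%:R * u = s by rewrite /u mulrC divfK // gt_eqF.
have J := arrow_ge0 (- u) (const_mx 1) pA.
rewrite diag_one -innerJ_qf -/s in J.
have h1 : u * s <= innerJ Z.
  have e : k%:R * (- u) ^+ 2 = u * s by rewrite sqrrN expr2 mulrA ku mulrC.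
  move: J; rewrite e; lra.
have h2 : innerJ (s^-1 *: Z) <= theta R E.
  apply: theta_ub.
  - by rewrite /symm linearZ /= sZ.
  - by move=> i j eij; rewrite mxE zZ // mulr0.
  - by rewrite mxtraceZ -/s mulVf // gt_eqF.
  - by apply: psd_scale => //; rewrite invr_ge0 ltW.
rewrite innerJZ in h2.
have h3 : u <= theta R E.
  apply: le_trans h2; rewrite mulrC ler_pdivlMr //.
have -> : s = k%:R * u by [].
by rewrite ler_wpM2l // ltW.
Qed.

Lemma feas2_to3 (R : realType) (n : nat) (E : rel 'I_n) (k : nat) (Z X : 'M[R]_n) :
  (1 <= k)%N -> feas2 k E Z X ->
  [/\ symm Z, zero_on_edges E Z, (forall i, Z i i <= 1), nonneg_mx Z
          & psd (arrow_mx k%:R Z Z)].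
Proof.
move=> k1 [[sZ sX] zZ X0 [nZ nX] [pZX pA]].
set c := (k.-1)%:R : R.
have kc : (k%:R : R) = c + 1 by rewrite /c natr1 prednK.
have c0 : 0 <= c by rewrite /c ler0n.
split => //.
- move=> i; have := arrow_ge0 (- Z i i) (delta_mx i 0) pA.
  rewrite diag_delta /qf qf_delta !mxE X0 mulr0 addr0 => h.
  have := nZ i i; nra.
- apply: arrow_psd => // t x.
  have h1 := arrow_ge0 (k%:R * t) x pA.
  have h2 : 0 <= qf (Z - X) x by case: pZX => _; exact.
  rewrite qfD qfZ in h1; rewrite qfB in h2.
  have e : k%:R * (k%:R * t ^+ 2 + 2 * t * ((diagv Z)^T *m x) 0 0 + qf Z x) =
     (1 * (k%:R * t) ^+ 2 + 2 * (k%:R * t) * ((diagv Z)^T *m x) 0 0 +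
      (qf Z x + c * qf X x)) + c * (qf Z x - qf X x).
    rewrite kc; ring.
  have : 0 <= k%:R * (k%:R * t ^+ 2 + 2 * t * ((diagv Z)^T *m x) 0 0 + qf Z x).
    by rewrite e; apply: addr_ge0 => //; apply: mulr_ge0.
  by rewrite pmulr_rge0 // ltr0n.
Qed.

Definition Mc (R : realType) (n p : nat) (S : {set 'I_n}) (c : 'I_n -> 'I_p)
  : 'M[R]_(n, p) := \matrix_(i, col) ((i \in S) && (c i == col))%:R.

Definition Z0 (R : realType) (n p : nat) (S : {set 'I_n}) (c : 'I_n -> 'I_p)
  : 'M[R]_n := \matrix_(i, j) ((i \in S) && (j \in S) && (c i == c j))%:R.

Lemma Z0_MMt (R : realType) (n p : nat) (S : {set 'I_n}) (c : 'I_n -> 'I_p) :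
  Z0 R S c = Mc R S c *m (Mc R S c)^T.
Proof.
apply/matrixP => i j; rewrite !mxE (bigD1 (c i)) //= big1 ?addr0.
  rewrite !mxE eqxx andbT -natrM mulnb; congr (_%:R).
  by rewrite (eq_sym (c j)); case: (i \in S); case: (j \in S).
move=> col ncol; rewrite !mxE (eq_sym (c i)) (negbTE ncol) andbF mul0r //.
Qed.

Lemma Mc_rowsum (R : realType) (n p : nat) (S : {set 'I_n}) (c : 'I_n -> 'I_p) i :
  \sum_col Mc R S c i col = (i \in S)%:R.
Proof.
rewrite (bigD1 (c i)) //= big1 ?addr0; first by rewrite mxE eqxx andbT.
by move=> col ncol; rewrite mxE eq_sym (negbTE ncol) andbF.
Qed.

Lemma Mc_colsum (R : realType) (n p : nat) (S : {set 'I_n}) (c : 'I_n -> 'I_p) col :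
  \sum_i Mc R S c i col = #|[set i in S | c i == col]|%:R.
Proof.
rewrite -sum_indic; apply: eq_bigr => i _; by rewrite mxE inE.
Qed.

Lemma card_classes (R : realType) (n p : nat) (S : {set 'I_n}) (c : 'I_n -> 'I_p) :
  \sum_col (#|[set i in S | c i == col]|%:R : R) = #|S|%:R.
Proof.
under eq_bigr => col _ do rewrite -(Mc_colsum R).
rewrite exchange_big /= -sum_indic; apply: eq_bigr => i _.
exact: Mc_rowsum.
Qed.

Lemma qf_MMt (R : realType) (m p : nat) (M : 'M[R]_(m, p)) x :
  qf (M *m M^T) x = \sum_col (\sum_i M i col * x i 0) ^+ 2.
Proof.
rewrite /qf.
have -> : x^T *m (M *m M^T) *m x = (M^T *m x)^T *m (M^T *m x).
  by rewrite trmx_mul trmxK !mulmxA.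
rewrite mxE; apply: eq_bigr => col _; rewrite !mxE expr2; congr (_ * _).
  by apply: eq_bigr => i _; rewrite !mxE.
by apply: eq_bigr => i _; rewrite !mxE.
Qed.

Lemma trZ0 (R : realType) (n p : nat) (S : {set 'I_n}) (c : 'I_n -> 'I_p) :
  \tr (Z0 R S c) = #|S|%:R.
Proof.
rewrite /mxtrace -sum_indic; apply: eq_bigr => i _.
by rewrite mxE eqxx andbT andbb.
Qed.

Lemma Z0_zero (R : realType) (n p : nat) (E : rel 'I_n) (S : {set 'I_n})
  (c : 'I_n -> 'I_p) :
  (forall i j, i \in S -> j \in S -> E i j -> c i != c j) ->
  zero_on_edges E (Z0 R S c).
Proof.
move=> h i j eij; rewrite mxE.
case iS: (i \in S) => //; case jS: (j \in S) => //=.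
by rewrite (negbTE (h i j iS jS eij)).
Qed.

Lemma Z0_nonneg (R : realType) (n p : nat) (S : {set 'I_n}) (c : 'I_n -> 'I_p) :
  nonneg_mx (Z0 R S c).
Proof. by move=> i j; rewrite mxE ler0n. Qed.

Lemma Z0_J (R : realType) (n p : nat) (S : {set 'I_n}) (c : 'I_n -> 'I_p) :
  (#|S|%:R : R) ^+ 2 <= p%:R * innerJ (Z0 R S c).
Proof.
rewrite innerJ_qf Z0_MMt qf_MMt -(card_classes R S c).
under [X in _ <= _ * X]eq_bigr => col _.
  rewrite (eq_bigr (fun i => Mc R S c i col)); last by move=> i _; rewrite [X in _ * X]mxE mulr1.
  rewrite Mc_colsum.
  over.
set y := (fun col => (#|[set i in S | c i == col]|%:R : R)).
have h := @wCS R _ (fun _ : 'I_p => 1 : R) y (fun _ => ler01).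
have e1 : \sum_i (1 * y i) = \sum_i y i by apply: eq_bigr => i _; rewrite mul1r.
have e2 : \sum_i (1 * y i ^+ 2) = \sum_i y i ^+ 2.
  by apply: eq_bigr => i _; rewrite mul1r.
rewrite e1 e2 sumr_const card_ord -mulr_natl mulr1 in h.
exact: h.
Qed.

Lemma qf1 (R : realType) (m : nat) (x : 'cV[R]_m) :
  qf 1%:M x = \sum_i x i 0 ^+ 2.
Proof.
rewrite /qf mulmx1 mxE; apply: eq_bigr => i _; by rewrite mxE expr2.
Qed.

Lemma Z0_I (R : realType) (n p : nat) (S : {set 'I_n}) (c : 'I_n -> 'I_p)
  (a : R) x :
  0 <= a -> (forall col, #|[set i in S | c i == col]|%:R <= a) ->
  qf (Z0 R S c) x <= a * \sum_i x i 0 ^+ 2.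
Proof.
move=> a0 ha; rewrite Z0_MMt qf_MMt.
have Mge0 : forall i col, 0 <= Mc R S c i col by move=> i col; rewrite mxE ler0n.
have step : forall col, (\sum_i Mc R S c i col * x i 0) ^+ 2 <=
                        a * \sum_i Mc R S c i col * x i 0 ^+ 2.
  move=> col.
  apply: le_trans (@wCS R _ (fun i => Mc R S c i col) (fun i => x i 0) (Mge0^~ col)) _.
  apply: ler_wpM2r; first by apply: sumr_ge0 => i _; rewrite mulr_ge0 ?sqr_ge0.
  by rewrite Mc_colsum.
apply: le_trans (ler_sum _ (fun col _ => step col)) _.
rewrite -mulr_sumr; apply: ler_wpM2l => //.
rewrite exchange_big /=; apply: ler_sum => i _.
rewrite -mulr_suml Mc_rowsum.
case: (i \in S); rewrite ?mul1r ?mul0r ?sqr_ge0 //.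
Qed.

Definition Xc (R : realType) (n k : nat) (S : {set 'I_n}) (c : 'I_n -> 'I_k)
  : 'M[R]_n :=
  \matrix_(i, j) ((k.-1)%:R^-1 * ((i \in S) && (j \in S) && (c i != c j))%:R).

Definition U0 (R : realType) (n : nat) (S : {set 'I_n}) : 'M[R]_n :=
  Z0 R S (fun _ => (ord0 : 'I_1)).

Lemma U0E (R : realType) (n : nat) (S : {set 'I_n}) i j :
  U0 R S i j = ((i \in S) && (j \in S))%:R.
Proof. by rewrite mxE eqxx andbT. Qed.

Lemma neq_k2 (n k : nat) (c : 'I_n -> 'I_k) i j : c i != c j -> (1 < k)%N.
Proof.
move=> ne; rewrite ltnNge; apply/negP => k1; move/negP: ne; apply.
apply/eqP/val_inj => /=.
have := ltn_ord (c i); have := ltn_ord (c j); move: k1.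
case: k c => [|[|k]] c //= _; rewrite !ltnS !leqn0 => /eqP -> /eqP -> //.
Qed.

Lemma key1 (R : realType) (n k : nat) (S : {set 'I_n}) (c : 'I_n -> 'I_k) :
  Z0 R S c + (k.-1)%:R *: Xc R S c = U0 R S.
Proof.
apply/matrixP => i j; rewrite U0E !mxE.
have [e|ne] := eqVneq (c i) (c j).
  by rewrite /= !andbT !andbF mulr0 mulr0 addr0.
have k2 := neq_k2 ne.
rewrite /= !andbT !andbF mulrA mulfV ?mul1r ?add0r //.
by rewrite pnatr_eq0 -lt0n -ltnS prednK // ltnW.
Qed.

Lemma key2 (R : realType) (n k : nat) (S : {set 'I_n}) (c : 'I_n -> 'I_k) :
  Xc R S c = (k.-1)%:R^-1 *: (U0 R S - Z0 R S c).
Proof.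
apply/matrixP => i j; rewrite !mxE eqxx andbT; congr (_ * _).
by case: (i \in S); case: (j \in S); case: (c i == c j); rewrite /= ?subrr ?subr0.
Qed.

Lemma sumS (R : realType) (n p : nat) (S : {set 'I_n}) (c : 'I_n -> 'I_p) (x : 'cV[R]_n) :
  \sum_col \sum_i Mc R S c i col * x i 0 = \sum_i (i \in S)%:R * x i 0.
Proof.
rewrite exchange_big /=; apply: eq_bigr => i _; by rewrite -(Mc_rowsum R S c i) mulr_suml.
Qed.

Lemma qfU0 (R : realType) (n : nat) (S : {set 'I_n}) x :
  qf (U0 R S) x = (\sum_i (i \in S)%:R * x i 0) ^+ 2.
Proof.
rewrite /U0 Z0_MMt qf_MMt big_ord1; congr (_ ^+ 2).
by apply: eq_bigr => i _; rewrite mxE eqxx andbT.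
Qed.

Lemma diagZ0 (R : realType) (n p : nat) (S : {set 'I_n}) (c : 'I_n -> 'I_p) (x : 'cV[R]_n) :
  ((diagv (Z0 R S c))^T *m x) 0 0 = \sum_i (i \in S)%:R * x i 0.
Proof.
rewrite mxE; apply: eq_bigr => i _; by rewrite !mxE eqxx andbT andbb.
Qed.

Lemma key1e (R : realType) (n k : nat) (S : {set 'I_n}) (c : 'I_n -> 'I_k) i j :
  Z0 R S c i j + (k.-1)%:R * Xc R S c i j = ((i \in S) && (j \in S))%:R.
Proof. by rewrite -(U0E R) -(key1 R S c) [RHS]mxE [X in _ = _ + X]mxE. Qed.

Lemma Z0ii (R : realType) (n p : nat) (S : {set 'I_n}) (c : 'I_n -> 'I_p) i :
  Z0 R S c i i = (i \in S)%:R.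
Proof. by rewrite mxE eqxx andbT andbb. Qed.

Lemma symmZ0 (R : realType) (n p : nat) (S : {set 'I_n}) (c : 'I_n -> 'I_p) :
  symm (Z0 R S c).
Proof. by rewrite Z0_MMt; case: (psd_MMt (Mc R S c)). Qed.

Lemma psdZ0 (R : realType) (n p : nat) (S : {set 'I_n}) (c : 'I_n -> 'I_p) :
  psd (Z0 R S c).
Proof. by rewrite Z0_MMt; exact: psd_MMt. Qed.

Lemma point1 (R : realType) (n : nat) (E : rel 'I_n) (k : nat) (S : {set 'I_n})
  (c : 'I_n -> 'I_k) :
  (1 <= k)%N -> (forall i j, i \in S -> j \in S -> E i j -> c i != c j) ->
  feas2 k E (Z0 R S c) (Xc R S c) /\ lin_ineq k (Z0 R S c) (Xc R S c).
Proof.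
move=> k1 hc.
set r := (k.-1)%:R^-1 : R.
have r0 : 0 <= r by rewrite invr_ge0 ler0n.
split; last first.
  split.
  - move=> i j _; rewrite -addrA key1e !Z0ii.
    by case: (i \in S); case: (j \in S); rewrite /=; lra.
  - move=> i j _.
    have -> : Z0 R S c i i - Z0 R S c i j - (k.-1)%:R * Xc R S c i j =
              Z0 R S c i i - (Z0 R S c i j + (k.-1)%:R * Xc R S c i j) by ring.
    rewrite key1e Z0ii.
    by case: (i \in S); case: (j \in S); rewrite /=; lra.
have sU : symm (U0 R S) by exact: symmZ0.
have sZ := symmZ0 R S c.
have sX : symm (Xc R S c) by rewrite /symm key2 linearZ linearB /= sU sZ.
split.
- by [].
- exact: Z0_zero.
- by move=> i; rewrite mxE eqxx andbF mulr0.
- by split; [exact: Z0_nonneg | move=> i j; rewrite mxE mulr_ge0 ?ler0n].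
split.
  split; first by rewrite /symm linearB /= sZ sX.
  move=> x; rewrite -/(qf _ x) qfB key2 qfZ qfB.
  set Q := qf (Z0 R S c) x; set V := qf (U0 R S) x.
  have Q0 : 0 <= Q by case: (psdZ0 R S c) => _; exact.
  have kQ : V <= k%:R * Q.
    rewrite /V /Q qfU0 Z0_MMt qf_MMt -(@sumS R _ _ S c x).
    set y := (fun col => \sum_i Mc R S c i col * x i 0).
    have h := @wCS R _ (fun _ : 'I_k => 1 : R) y (fun _ => ler01).
    have e1 : \sum_i (1 * y i) = \sum_i y i by apply: eq_bigr => i _; rewrite mul1r.
    have e2 : \sum_i (1 * y i ^+ 2) = \sum_i y i ^+ 2.
      by apply: eq_bigr => i _; rewrite mul1r.
    by rewrite e1 e2 sumr_const card_ord -mulr_natl mulr1 in h.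
  have hr : r * (k.-1)%:R <= 1.
    have [->|nz] := eqVneq ((k.-1)%:R : R) 0; first by rewrite mulr0 ler01.
    by rewrite mulVf.
  have kk : (k%:R : R) = (k.-1)%:R + 1 by rewrite natr1 prednK.
  have a1 : 0 <= r * (k%:R * Q - V) by rewrite mulr_ge0 // subr_ge0.
  have a2 : 0 <= (1 - r * (k.-1)%:R) * Q by rewrite mulr_ge0 // subr_ge0.
  have -> : Q - r * (V - Q) = r * (k%:R * Q - V) + (1 - r * (k.-1)%:R) * Q.
    rewrite kk; ring.
  exact: addr_ge0.
rewrite key1; apply: arrow_psd => // t x.
rewrite diagZ0 qfU0.
have := sqr_ge0 (t + \sum_i (i \in S)%:R * x i 0); rewrite sqrrD; lra.
Qed.

Lemma point2 (R : realType) (n : nat) (E : rel 'I_n) (p : nat) (S : {set 'I_n})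
  (c : 'I_n -> 'I_p) (a : R) :
  0 < a -> (forall i j, i \in S -> j \in S -> E i j -> c i != c j) ->
  (forall col, #|[set i in S | c i == col]|%:R <= a) ->
  let Z := a^-1 *: Z0 R S c in
  [/\ symm Z, zero_on_edges E Z, \tr Z = a^-1 * #|S|%:R,
      psd Z /\ psd (1%:M - Z) & nonneg_mx Z] /\
  (#|S|%:R : R) ^+ 2 <= p%:R * a * innerJ Z.
Proof.
move=> a0 hc ha Z.
have sZ : symm Z by rewrite /symm /Z linearZ /= symmZ0.
split; last first.
  rewrite /Z innerJZ -mulrA (mulrA a) mulfV ?gt_eqF // mul1r.
  exact: Z0_J.
split => //.
- by move=> i j eij; rewrite /Z mxE (@Z0_zero R _ _ E S c hc) // mulr0.
- by rewrite /Z mxtraceZ trZ0.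
- split; first by apply: psd_scale; [rewrite invr_ge0 ltW | exact: psdZ0].
  split; first by rewrite /symm linearB /= tr_scalar_mx sZ.
  move=> x; rewrite -/(qf _ x) qfB qf1 /Z qfZ subr_ge0.
  rewrite ler_pdivrMl //; exact: Z0_I (ltW a0) ha.
- move=> i j; rewrite /Z mxE; apply: mulr_ge0; [by rewrite invr_ge0 ltW | exact: Z0_nonneg].
Qed.

Lemma class_stable (n p : nat) (E : rel 'I_n) (S : {set 'I_n}) (c : 'I_n -> 'I_p)
  col :
  (forall i j, i \in S -> j \in S -> E i j -> c i != c j) ->
  stable E [set i in S | c i == col].
Proof.
move=> hc; apply/forallP => i; apply/implyP; rewrite inE => /andP[iS /eqP ci].
apply/forallP => j; apply/implyP; rewrite inE => /andP[jS /eqP cj].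
apply/negP => eij; have := hc i j iS jS eij; by rewrite ci cj eqxx.
Qed.

Lemma stable_le (n : nat) (E : rel 'I_n) (S : {set 'I_n}) :
  stable E S -> (#|S| <= alpha E)%N.
Proof. move=> h; rewrite /alpha; exact: (@leq_bigmax_cond _ (fun S => stable E S) (fun S => #|S|) S h). Qed.

Lemma exists_max_stable (n : nat) (E : rel 'I_n) :
  exists S : {set 'I_n}, stable E S /\ #|S| = alpha E.
Proof.
have h : (0 < #|[pred S : {set 'I_n} | stable E S]|)%N.
  apply/card_gt0P; exists (finset.set0 : {set 'I_n}); rewrite inE.
  by apply/forallP => i; rewrite inE.
have [S0 HS0 e] := eq_bigmax_cond (fun S : {set 'I_n} => #|S|) h.
by exists S0; split; [exact: HS0 | rewrite /alpha e].
Qed.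

Lemma exists_max_kcol (n k : nat) (E : rel 'I_n) : (1 <= k)%N ->
  exists S : {set 'I_n}, exists c : 'I_n -> 'I_k,
    (forall i j, i \in S -> j \in S -> E i j -> c i != c j) /\
    #|S| = alpha_k k E.
Proof.
move=> k1.
have h : (0 < #|[pred S : {set 'I_n} | `[< k_colorable_set k E S >]]|)%N.
  apply/card_gt0P; exists (finset.set0 : {set 'I_n}); rewrite inE; apply/asboolP.
  apply/asboolP; exists (fun _ => @Ordinal k 0 k1) => i j; by rewrite inE.
have [S0 HS0 e] := eq_bigmax_cond (fun S : {set 'I_n} => #|S|) h.
move: HS0; rewrite inE => -[c hc].
by exists S0, c; split; [exact: hc | rewrite /alpha_k e].
Qed.

Lemma main_pos (R : realType) (n : nat) (E : rel 'I_n) (k : nat) :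
  (0 < n)%N -> simple_graph E -> (1 <= k)%N ->
  (alpha_k k E)%:R = k%:R * theta R E ->
  [/\ theta_k R k E = (alpha_k k E)%:R, theta'_k R k E = (alpha_k k E)%:R,
      theta1_k R k E = (alpha_k k E)%:R, theta2_k R k E = (alpha_k k E)%:R
    & theta3_k R k E = (alpha_k k E)%:R /\ (k * alpha E)%:R = (alpha_k k E)%:R :> R].
Proof.
move=> n0 [symE irrE] k1 H.
have kp : 0 < (k%:R : R) by rewrite ltr0n.
have [S0 [stS0 cS0]] := exists_max_stable E.
have a1 : (1 <= alpha E)%N.
  pose i0 : 'I_n := Ordinal n0.
  have : stable E [set i0].
    apply/forallP => i; apply/implyP; rewrite inE => /eqP ->.
    apply/forallP => j; apply/implyP; rewrite inE => /eqP ->.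
    by rewrite irrE.
  by move/stable_le; rewrite cards1.
have ap : 0 < ((alpha E)%:R : R) by rewrite ltr0n.
have ta : (alpha E)%:R <= theta R E.
  have hc : forall i j, i \in S0 -> j \in S0 -> E i j ->
      (fun _ : 'I_n => (ord0 : 'I_1)) i != (fun _ : 'I_n => (ord0 : 'I_1)) j.
    move=> i j iS jS eij; move/forallP: stS0 => /(_ i) /implyP /(_ iS).
    by move/forallP => /(_ j) /implyP /(_ jS); rewrite eij.
  have hcl : forall col : 'I_1,
      (#|[set i in S0 | (fun _ : 'I_n => (ord0 : 'I_1)) i == col]|%:R : R)
        <= (alpha E)%:R.
    move=> col; rewrite ler_nat -cS0; apply: subset_leq_card.
    by apply/fintype.subsetP => i; rewrite inE => /andP[].
  have [[sZ zZ tZ [pZ _] _] J] := point2 ap hc hcl.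
  have := theta_ub sZ zZ _ pZ.
  rewrite tZ cS0 mulVf ?gt_eqF // => /(_ erefl).
  apply: le_trans.
  by move: J; rewrite mul1r expr2 cS0 ler_pM2l.
have [S1 [c1 [hc1 cS1]]] := exists_max_kcol E k1.
set a := alpha E in a1 ap ta cS0 *.
set ak := alpha_k k E in H cS1 *.
have cls1 : forall col, (#|[set i in S1 | c1 i == col]| <= a)%N.
  by move=> col; apply: stable_le; exact: class_stable.
have akle : (ak%:R : R) <= k%:R * a%:R.
  rewrite -cS1 -(card_classes R S1 c1).
  apply: le_trans (ler_sum _ (fun col _ => (_ : _ <= (a%:R : R)))) _.
    by move=> col; rewrite ler_nat.
  by rewrite sumr_const card_ord mulr_natl.
have eq1 : (ak%:R : R) = k%:R * a%:R.
  apply/le_anti/andP; split => //.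
  by rewrite H; apply: ler_wpM2l => //; exact: ltW.
have t0 : 0 <= theta R E by apply: le_trans ta; exact: ltW.
have UB3 : forall Z : 'M[R]_n, [/\ symm Z, zero_on_edges E Z, (forall i, Z i i <= 1),
      nonneg_mx Z & psd (arrow_mx k%:R Z Z)] -> \tr Z <= ak%:R.
  by move=> Z [sZ zZ _ _ pA]; rewrite H; exact: theta3_ub.
have UBk : forall Z : 'M[R]_n, symm Z -> zero_on_edges E Z -> \tr Z = k%:R ->
    psd Z -> innerJ Z <= ak%:R.
  by move=> Z sZ zZ tZ pZ; rewrite H; exact: thetak_ub.
have hcl1 : forall col, (#|[set i in S1 | c1 i == col]|%:R : R) <= a%:R.
  by move=> col; rewrite ler_nat.
have [[sZ zZ tZ [pZ pIZ] nZ] J] := point2 ap hc1 hcl1.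
set Zp := (a%:R^-1 *: Z0 R S1 c1) in sZ zZ tZ pZ pIZ nZ J.
have tZ' : \tr Zp = k%:R.
  by rewrite tZ cS1 eq1 mulrCA mulVf ?gt_eqF // mulr1.
have JZ : (ak%:R : R) <= innerJ Zp.
  have akp : 0 < (ak%:R : R) by rewrite eq1 mulr_gt0.
  by move: J; rewrite cS1 expr2 -eq1 ler_pM2l.
have [F1 L1] := @point1 R _ E _ _ _ k1 hc1.
have F3 := feas2_to3 k1 F1.
have tr1 : \tr (Z0 R S1 c1) = ak%:R by rewrite trZ0 cS1.
split.
- rewrite /theta_k; apply: sup_eq.
    by exists (innerJ Zp); split => //; exists Zp.
  by move=> y [Z [sZ' zZ' tZ'' pZ' _] <-]; exact: UBk.
- rewrite /theta'_k; apply: sup_eq.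
    by exists (innerJ Zp); split => //; exists Zp.
  by move=> y [Z [sZ' zZ' tZ'' [pZ' _] _] <-]; exact: UBk.
- rewrite /theta1_k; apply: sup_eq.
    exists (\tr (Z0 R S1 c1)); rewrite tr1; split => //.
    by exists (Z0 R S1 c1) => //; exists (Xc R S1 c1).
  by move=> y [Z [X [F _]] <-]; apply: UB3; exact: feas2_to3 k1 F.
- rewrite /theta2_k; apply: sup_eq.
    exists (\tr (Z0 R S1 c1)); rewrite tr1; split => //.
    by exists (Z0 R S1 c1) => //; exists (Xc R S1 c1).
  by move=> y [Z [X F] <-]; apply: UB3; exact: feas2_to3 k1 F.
split.
- rewrite /theta3_k; apply: sup_eq.
    exists (\tr (Z0 R S1 c1)); rewrite tr1; split => //.
    by exists (Z0 R S1 c1).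
  by move=> y [Z HZ <-]; exact: UB3.
by rewrite natrM -eq1.
Qed.

Lemma max0 (I : finType) (P : pred I) (F : I -> nat) :
  (forall i, P i -> F i = 0%N) -> \max_(i | P i) F i = 0%N.
Proof.
move=> h; apply/eqP; rewrite -leqn0; apply/bigmax_leqP => i Pi.
by rewrite h.
Qed.

Lemma main0 (R : realType) (E : rel 'I_0) (k : nat) : (1 <= k)%N ->
  [/\ theta_k R k E = 0, theta'_k R k E = 0,
      theta1_k R k E = 0, theta2_k R k E = 0
    & theta3_k R k E = 0 /\ alpha E = 0%N /\ alpha_k k E = 0%N].
Proof.
move=> k1.
have tr0 : forall Z : 'M[R]_0, \tr Z = 0 by move=> Z; rewrite /mxtrace big_ord0.
have card0 : forall S : {set 'I_0}, #|S| = 0%N.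
  by move=> S; apply/eqP; rewrite -leqn0; apply: (leq_trans (max_card _)); rewrite card_ord.
have kn0 : (k%:R : R) != 0 by rewrite pnatr_eq0 -lt0n.
split.
- apply: sup_zero => y [Z [_ _ tZ _ _] _].
  by move: kn0; rewrite -tZ tr0 eqxx.
- apply: sup_zero => y [Z [_ _ tZ _ _] _].
  by move: kn0; rewrite -tZ tr0 eqxx.
- by apply: sup_zero => y [Z _ <-]; rewrite tr0.
- by apply: sup_zero => y [Z _ <-]; rewrite tr0.
split; first by apply: sup_zero => y [Z _ <-]; rewrite tr0.
by split; apply: max0 => S _; exact: card0.
Qed.

Local Close Scope classical_set_scope.

Theorem lemma5 (R : realType) (n : nat) (E : rel 'I_n) (k : nat) :
  simple_graph E -> (1 <= k)%N ->
  (alpha_k k E)%:R = k%:R * theta R E ->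
  theta_k R k E = theta'_k R k E /\
  theta'_k R k E = theta1_k R k E /\
  theta1_k R k E = theta2_k R k E /\
  theta2_k R k E = theta3_k R k E /\
  theta3_k R k E = (k * alpha E)%:R /\
  (k * alpha E)%:R = (alpha_k k E)%:R :> R.
Proof.
case: n E => [|n] E hs k1 H.
  have [-> -> -> -> [-> [-> ->]]] := main0 R E k1.
  by rewrite muln0.
have [-> -> -> -> [-> ->]] := main_pos (ltn0Sn n) hs k1 H.
by [].
Qed.
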